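(* Let $(A,\circ)$ be a Novikov algebra and $\{a,b\}=a\circ b+b\circ a$. Then for all $a,b,c,d\in A$, $$\{\{a,b\},\{c,d\}\}-\{\{a,d\},\{c,b\}\}=\{d\circ c,a\circ b\}+\{c\circ d,b\circ a\}-\{b\circ c,a\circ d\}-\{c\circ b,d\circ a\}.$$
   Context: A (right) Novikov algebra is an algebra $(A,\circ)$ satisfying $a\circ(b\circ c)-(a\circ b)\circ c=a\circ(c\circ b)-(a\circ c)\circ b$ and $a\circ(b\circ c)=b\circ(a\circ c)$ for all $a,b,c$. *)

(* Defs.v *)
From mathcomp Require Import all_boot all_algebra.
Set Implicit Arguments. Unset Strict Implicit. Unset Printing Implicit Defensive.
Import GRing.Theory.
Local Open Scope ring_scope.

Definition bilinear_prod (K : fieldType) (V : lmodType K) (m : V -> V -> V) : Prop :=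
  (forall a b c, m (a + b) c = m a c + m b c) /\
  (forall a b c, m a (b + c) = m a b + m a c) /\
  (forall (k : K) a b, m (k *: a) b = k *: m a b) /\
  (forall (k : K) a b, m a (k *: b) = k *: m a b).

(* Right Novikov identities. *)
Definition novikov (K : fieldType) (V : lmodType K) (m : V -> V -> V) : Prop :=
  bilinear_prod m /\
  (forall a b c, m a (m b c) - m (m a b) c = m a (m c b) - m (m a c) b) /\
  (forall a b c, m a (m b c) = m b (m a c)).

Definition acomm (K : fieldType) (V : lmodType K) (m : V -> V -> V) (a b : V) : V :=
  m a b + m b a.

(* Main.v *)
From HB Require Import structures.
From mathcomp Require Import all_boot all_algebra.
From mathcomp Require Import ring.
Import GRing.Theory.
Local Open Scope ring_scope.

Definition SZ (V : zmodType) := (int * V)%type.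
HB.instance Definition _ (V : zmodType) := GRing.Zmodule.on (SZ V).
Definition szmul (V : zmodType) (x y : SZ V) : SZ V := (x.1 * y.1, x.2 *~ y.1 + y.2 *~ x.1).
Definition szone (V : zmodType) : SZ V := (1, 0).
Section S. 
Context (V : zmodType).
Lemma szA : associative (@szmul V).
Proof. case=> a u [b v] [c w]; rewrite /szmul /=; congr (_, _); first by rewrite mulrA.
by rewrite !mulrzDl -!mulrzA [c * a]mulrC [b * a]mulrC addrA. Qed.
Lemma szC : commutative (@szmul V).
Proof. case=> a u [b v]; rewrite /szmul /=; congr (_, _); [exact: mulrC|exact: addrC]. Qed.
Lemma sz1 : left_id (@szone V) (@szmul V).
Proof. case=> a u; rewrite /szmul /szone /=; congr (_, _); first by rewrite mul1r.
by rewrite mul0rz add0r mulr1z. Qed.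
Lemma szD : left_distributive (@szmul V) +%R.
Proof. case=> a u [b v] [c w]; rewrite /szmul /=; congr (_, _); first by rewrite mulrDl.
by rewrite mulrzDr mulrzDl addrACA. Qed.
Lemma sz10 : @szone V != 0.
Proof. by []. Qed.
End S.
HB.instance Definition _ (V : zmodType) := GRing.Zmodule_isComNzRing.Build (SZ V) (@szA V) (@szC V) (@sz1 V) (@szD V) (@sz10 V).
Definition emb (V : zmodType) (v : V) : SZ V := (0, v).
Arguments emb {V}.
Lemma embD (V : zmodType) (u v : V) : emb (u + v) = emb u + emb v.
Proof. by rewrite /emb; congr (_, _); rewrite addr0. Qed.
Lemma embN (V : zmodType) (u : V) : emb (- u) = - emb u.
Proof. by rewrite /emb; congr (_, _); rewrite oppr0. Qed.
Lemma embB (V : zmodType) (u v : V) : emb (u - v) = emb u - emb v.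
Proof. by rewrite embD embN. Qed.
Lemma emb_inj (V : zmodType) : injective (@emb V).
Proof. by move=> u v [->]. Qed.

Require Import Defs.

Lemma mNr {K : fieldType} {V : lmodType K} {m : V -> V -> V} (hN : novikov m) x y :
  m x (- y) = - m x y.
Proof. case: hN => [[_ [_ [_ hs]]] _]. by rewrite -scaleN1r hs scaleN1r. Qed.

Lemma Qid {K : fieldType} {V : lmodType K} {m : V -> V -> V} (hN : novikov m) x y z w :
  m (m x y) (m z w) = m (m x w) (m z y) + (m z (m x (m y w)) - m z (m x (m w y))).
Proof.
have hN' := hN; case: hN' => [[hDl [hDr _]] [hRS hLC]].
rewrite (hLC (m x y) z w) (hLC (m x w) z y).
have E : m (m x y) w = m x (m y w) - m x (m w y) + m (m x w) y.
  apply: (@emb_inj V); have H' := congr1 emb (hRS x y w); rewrite !(embD, embN) in H' *.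
  have -> : emb (m x (m y w)) - emb (m x (m w y)) + emb (m (m x w) y)
    = emb (m x (m y w)) - (emb (m x (m w y)) - emb (m (m x w) y)) by ring.
  by rewrite -H'; ring.
rewrite E !hDr !(mNr hN).
by apply: (@emb_inj V); rewrite !(embD, embN); ring.
Qed.

Theorem mainTheorem11 (K : fieldType) (V : lmodType K) (m : V -> V -> V)
  (hN : novikov m) (a b c d : V) :
  acomm m (acomm m a b) (acomm m c d) - acomm m (acomm m a d) (acomm m c b)
  = acomm m (m d c) (m a b) + acomm m (m c d) (m b a)
    - acomm m (m b c) (m a d) - acomm m (m c b) (m d a).
Proof.
have hN' := hN; case: hN' => [[hDl [hDr _]] [hRS hLC]].
rewrite /acomm !(hDl, hDr).
rewrite (Qid hN a b c d) (Qid hN b a d c) (Qid hN c d a b) (Qid hN d c b a).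
rewrite (hLC c a (m b d)) (hLC c a (m d b)) (hLC d b (m a c)) (hLC d b (m c a)).
by apply: (@emb_inj V); rewrite !(embD, embN); ring.
Qed.
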